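(* Let $\mathbf{k}$ be a commutative ring, $n\ge0$, $\mathcal{A}=\mathbf{k}[S_n]$. The family $\{\mathbf{B}_{\operatorname{LRM}'(w)}\,w \mid w\in S_n\}$ is a basis of the $\mathbf{k}$-module $\mathcal{A}$.
   Context: $S_n$ is the symmetric group on $[n]=\{1,\dots,n\}$, with product $(uw)(i)=u(w(i))$. $\operatorname{Des}(u)=\{i\in[n-1]:u(i)>u(i+1)\}$; for $I\subseteq[n-1]$, $\mathbf{B}_I=\sum_{u\in S_n,\ \operatorname{Des}(u)\subseteq I}u$. $\operatorname{LRM}(w)=\{i\in[n]: w(k)>i \text{ for all } k<w^{-1}(i)\}$ (left-to-right minima), and $\operatorname{LRM}'(w)=\{\ell-1:\ell\in\operatorname{LRM}(w),\ \ell>1\}\subseteq[n-1]$. *)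

(* Defs.v *)
From HB Require Import structures.
From mathcomp Require Import all_boot all_order all_algebra all_fingroup.
Set Implicit Arguments. Unset Strict Implicit. Unset Printing Implicit Defensive.
Import GRing.Theory.
Local Open Scope ring_scope.

(* Permutations of [n] = {1..n} are represented by 'S_n acting on 'I_n = {0..n-1};
   the value of u at position i in {1..n} (paper's 1-based convention) is
   permv u i = (u (i-1)) + 1.  Outside {1..n} it is 0 (never used). *)
Definition permv n (u : 'S_n) (i : nat) : nat :=
  if (0 < i)%N then (if insub i.-1 is Some j then (u j).+1 else 0%N) else 0%N.

(* Paper's product (uw)(i) = u(w(i)); MathComp's (w * u)%g x = u (w x). *)
Definition pmul n (u w : 'S_n) : 'S_n := (w * u)%g.

(* Des(u) \subseteq I, for I a predicate on nat (a subset of [n-1]);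
   i : 'I_n with 0 < i ranges exactly over [n-1] = {1..n-1}. *)
Definition des_sub n (u : 'S_n) (I : pred nat) : bool :=
  [forall i : 'I_n, ((0 < i)%N && (permv u i.+1 < permv u i)%N) ==> I i].

(* Left-to-right minima: LRM(w) = {i in [n] : w(k) > i for all k < w^{-1}(i)}. *)
Definition LRM n (w : 'S_n) : pred nat := fun i =>
  [&& (0 < i)%N, (i <= n)%N &
   [forall k : 'I_n, ((k.+1 < permv (w^-1)%g i)%N) ==> (i < permv w k.+1)%N]].

Definition LRM' n (w : 'S_n) : pred nat := fun i => (0 < i)%N && LRM w i.+1.

(* The group algebra k[S_n], as the free k-module {ffun 'S_n -> k^o}
   (k^o = k viewed as the regular left k-module). *)
Notation galg k n := ({ffun 'S_n -> k^o}) (only parsing).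

Definition gelt (k : comPzRingType) n (u : 'S_n) : galg k n :=
  [ffun g => ((g == u)%:R : k)].

Definition gmul (k : comPzRingType) n (a b : galg k n) : galg k n :=
  [ffun g => \sum_(u : 'S_n) \sum_(v : 'S_n)
               (if pmul u v == g then a u * b v else 0)].

Definition Bsum (k : comPzRingType) n (I : pred nat) : galg k n :=
  \sum_(u : 'S_n | des_sub u I) gelt k u.

Definition is_basis (k : pzRingType) (V : lmodType k) (I : finType)
  (b : I -> V) : Prop :=
  (forall c : I -> k, \sum_(i : I) c i *: b i = 0 -> forall i, c i = 0) /\
  (forall v : V, exists c : I -> k, v = \sum_(i : I) c i *: b i).

(* Main.v *)
Require Import Defs.
From HB Require Import structures.
From mathcomp Require Import all_boot all_order all_algebra all_fingroup.
Import Order.TTheory.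
Set Implicit Arguments. Unset Strict Implicit.

Definition key n (g : 'S_n) : n.-tuplelexi nat := [tuple (val (g i)) | i < n].

Lemma permv_S n (u : 'S_n) (i : 'I_n) : permv u i.+1 = (u i).+1.
Proof.
rewrite /permv /=; case: insubP => [j _ Hj|]; last by rewrite ltn_ord.
by congr (_.+1); congr (val (u _)); apply: val_inj.
Qed.

Lemma des_subE n (u : 'S_n) I : des_sub u I ->
  forall (i j : 'I_n), j.+1 = i -> (u i < u j)%N -> I i.
Proof.
move=> /forallP H i j Hij Hlt; move: (H i) => /implyP; apply.
by rewrite -Hij /= permv_S Hij permv_S ltnS.
Qed.

Lemma des_sub1 n I : des_sub (1%g : 'S_n) I.
Proof.
apply/forallP => -[[|j] Hj]; apply/implyP => //=.
have Hj' : (j < n)%N by apply: ltnW.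
rewrite (@permv_S n 1%g (Ordinal Hj)) (@permv_S n 1%g (Ordinal Hj')) !perm1 /=.
by rewrite ltnS ltnNge leqnSn.

Qed.

Lemma LRM'E n (w : 'S_n) (i : 'I_n) : LRM' w i ->
  forall k : 'I_n, (k < (w^-1)%g i)%N -> (i < w k)%N.
Proof.
move=> /andP[_ /and3P[_ _ /forallP H]] k Hk; move: (H k).
by rewrite !permv_S !ltnS Hk => /implyP; apply.
Qed.

Lemma tri n (w g : 'S_n) : des_sub (w^-1 * g)%g (LRM' w) -> g = w \/ (key g < key w)%O.
Proof.
set u := (w^-1 * g)%g => Hd.
have ug : forall x, u (w x) = g x by move=> x; rewrite permM permK.
case: (eqVneq g w) => [->|gw]; [by left | right].
have [i0 Hi0] : exists i, g i != w i.
  apply/existsP; apply: contraR gw => /existsPn H; apply/eqP/permP => x.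
  by apply/eqP; move: (H x); rewrite negbK.
case: (@arg_minnP _ i0 (fun i => g i != w i) val Hi0) => k Hk kmin.
have eqk : forall i : 'I_n, (i < k)%N -> g i = w i.
  move=> i Hi; apply/eqP; apply: contraTT Hi => Hi; rewrite -leqNgt; exact: kmin.
apply/ltxi_tuplePlt; exists k => [i Hi|]; rewrite !tnth_mktuple.
  by rewrite eqk.
set v := w k.
have fixs : forall s : 'I_n, (v < s)%N -> LRM' w s -> u s = s.
  move=> s vs Hs; set q := (w^-1)%g s.
  have wq : w q = s by rewrite /q permKV.
  case: (ltnP q k) => Hq.
    by rewrite -{1}wq ug eqk.
  case: (ltngtP k q) => Hkq.
  - by have := LRM'E Hs Hkq; rewrite -/v ltnNge ltnW.
  - by move: Hq; rewrite leqNgt Hkq.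
  - by move: vs; rewrite /v (val_inj Hkq) wq ltnn.
rewrite -ug -/v; change (val (u v) < val v)%N; rewrite ltnNge; apply/negP => Hle.
have Hlt : (v < u v)%N.
  rewrite ltn_neqAle Hle andbT; apply: contra Hk => /eqP Hv.
  by rewrite -ug /v -(val_inj Hv).
have claim : forall d (z : 'I_n), val z = (v + d)%N -> (v < u z)%N.
  elim=> [|d IH] z Hz.
    by rewrite (_ : z = v) //; apply: val_inj; rewrite Hz addn0.
  have Hz' : (v + d < n)%N by apply: leq_ltn_trans (ltn_ord z); rewrite Hz addnS.
  have := IH (Ordinal Hz') erefl => IHz.
  case: (ltnP (u z) (u (Ordinal Hz'))) => Hc.
    have HL : LRM' w z by apply: (des_subE Hd (j := Ordinal Hz')) => //=; rewrite Hz addnS.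
    by rewrite fixs // Hz addnS ltnS leq_addr.
  apply: (ltn_trans IHz); rewrite ltn_neqAle Hc andbT.
  apply/negP => /eqP/val_inj/perm_inj Heq.
  by move: Hz; rewrite -Heq /= addnS => /eqP; rewrite eqn_leq ltnn andbF.
pose A := [set z : 'I_n | (v <= z)%N].
pose B := [set z : 'I_n | (v < z)%N].
have sub : (u @: A \subset B).
  apply/subsetP => y /imsetP[z]; rewrite inE => Hz ->; rewrite inE.
  by apply: (claim (z - v)); rewrite subnKC.
have prop : B \proper A.
  apply/properP; split.
    by apply/subsetP => z; rewrite !inE; apply: ltnW.
  by exists v; rewrite !inE ?leqnn ?ltnn.
have := subset_leq_card sub; rewrite card_imset; last exact: perm_inj.
by rewrite leqNgt proper_card.
Qed.

Import GRing.Theory.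
Local Open Scope ring_scope.


Lemma galg_sumE (k : comPzRingType) (n : nat) (I : finType) (c : I -> k) (f : I -> {ffun 'S_n -> k^o}) (x : 'S_n) :
  (\sum_(i : I) c i *: f i) x = \sum_(i : I) c i * f i x.
Proof. by rewrite sum_ffunE; apply: eq_bigr => i _; rewrite ffunE. Qed.

Lemma gdecomp (k : comPzRingType) (n : nat) (v : {ffun 'S_n -> k^o}) : v = \sum_(g : 'S_n) v g *: gelt k g.
Proof.
apply/ffunP => x; rewrite galg_sumE (bigD1 x) //= big1 ?addr0.
  by rewrite ffunE eqxx mulr1.
by move=> y yx; rewrite ffunE eq_sym (negbTE yx) mulr0.
Qed.

Definition bb (k : comPzRingType) (n : nat) (w : 'S_n) := gmul (Bsum k n (LRM' w)) (gelt k w).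

Lemma bbE (k : comPzRingType) (n : nat) (w g : 'S_n) : bb k w g = (des_sub (w^-1 * g)%g (LRM' w))%:R.
Proof.
rewrite /bb /gmul ffunE.
rewrite (eq_bigr (fun u => if pmul u w == g then Bsum k n (LRM' w) u else 0)); last first.
  move=> u _; rewrite (bigD1 w) //= big1 ?addr0.
    by rewrite ffunE eqxx mulr1.
  by move=> v vw; rewrite ffunE (negbTE vw) mulr0; case: ifP.
rewrite (bigD1 (w^-1 * g)%g) //= big1 ?addr0.
  rewrite /pmul mulgA mulgV mul1g eqxx /Bsum sum_ffunE.
  rewrite (big_mkcond) (bigD1 (w^-1 * g)%g) //= big1 ?addr0.
    by rewrite ffunE eqxx; case: ifP.
  by move=> y yx; rewrite ffunE eq_sym (negbTE yx); case: ifP.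
move=> u uw; case: eqP => // Hu; exfalso; move/eqP: uw; apply.
by rewrite -Hu /pmul mulgA mulVg mul1g.
Qed.


Lemma rk_lt n (h g : 'S_n) : (key h < key g)%O ->
  (#|[set x : 'S_n | (key x < key h)%O]| < #|[set x : 'S_n | (key x < key g)%O]|)%N.
Proof.
move=> hg; apply: proper_card; apply/properP; split.
  by apply/subsetP => x; rewrite !inE => /lt_trans; apply.
by exists h; rewrite !inE ?hg ?ltxx.
Qed.

Theorem corollary3p6 (k : comPzRingType) (n : nat) :
  is_basis (V := galg k n)
    (fun w : 'S_n => gmul (Bsum k n (LRM' w)) (gelt k w)).
Proof.
pose rk (g : 'S_n) := #|[set x : 'S_n | (key x < key g)%O]|.
have bb1 : forall g : 'S_n, bb k g g = 1.
  by move=> g; rewrite bbE mulVg des_sub1.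
split.
- move=> c Hc i; apply/eqP; apply: contraT => Hi.
  case: (@arg_maxnP _ i (fun w => c w != 0) rk Hi) => w0 Hw0 wmax.
  move/ffunP: Hc => /(_ w0); rewrite galg_sumE ffunE (bigD1 w0) //= big1 ?addr0.
    by rewrite -/(bb k w0) bb1 mulr1 => H; move: Hw0; rewrite H eqxx.
  move=> w ww0; rewrite -/(bb k w) bbE.
  case: (boolP (des_sub _ _)) => H; last by rewrite mulr0.
  case: (tri H) => [E|lt]; first by move: ww0; rewrite E eqxx.
  case: (eqVneq (c w) 0) => [->|cw]; first by rewrite mul0r.
  have H2 : (rk w <= rk w0)%N by exact: wmax w cw.
  by rewrite leqNgt rk_lt in H2.
- pose inspan (v : galg k n) := exists c : 'S_n -> k,
    v = \sum_(i : 'S_n) c i *: gmul (Bsum k n (LRM' i)) (gelt k i).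
  have in0 : inspan 0 by exists (fun _ => 0); rewrite big1 // => i _; rewrite scale0r.
  have inD : forall x y, inspan x -> inspan y -> inspan (x + y).
    move=> x y [c ->] [d ->]; exists (fun i => c i + d i).
    by rewrite -big_split /=; apply: eq_bigr => i _; rewrite scalerDl.
  have inZ : forall a x, inspan x -> inspan (a *: x).
    move=> a x [c ->]; exists (fun i => a * c i).
    by rewrite scaler_sumr; apply: eq_bigr => i _; rewrite scalerA.
  have inb : forall g, inspan (bb k g).
    move=> g; exists (fun i => (i == g)%:R); rewrite (bigD1 g) //= big1 ?addr0.
      by rewrite eqxx scale1r.
    by move=> i ig; rewrite (negbTE ig) scale0r.
  have ingelt : forall m g, (rk g < m)%N -> inspan (gelt k g).
    elim=> [|m IH] g // Hg.
    have E : gelt k g = bb k g + (-1) *: \sum_(h | h != g) bb k g h *: gelt k h.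
      rewrite {1}(gdecomp (bb k g)) (bigD1 g) //= bb1 scale1r scaleN1r.
      by rewrite addrK.
    rewrite E; apply: (inD) => //; apply: (inZ).
    apply: (big_ind inspan) => // h hg.
    rewrite bbE; case: (boolP (des_sub _ _)) => H; last by rewrite scale0r.
    case: (tri H) => [Eh|lt]; first by move: hg; rewrite Eh eqxx.
    apply: (inZ); apply: IH; rewrite ltnS in Hg; exact: leq_trans (rk_lt lt) Hg.
  move=> v; rewrite (gdecomp v); apply: (big_ind inspan) => // g _.
  by apply: (inZ); apply: (ingelt (rk g).+1).
Qed.
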